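(* Let $M>0$, $m\in\mathbb{R}$ and let $n\ge2$ be an integer. Let $\mathcal{H}$ be the set of functions $h:\mathbb{R}\to[0,\infty)$ such that: (i) the support of $h$ (closure of $\{h>0\}$) is an interval $[0,b]$ for some $b>0$; (ii) $h$ is continuous and concave on $[0,b]$; (iii) $h(0)=1$ and the right derivative of $h$ at $0$ is $\le m$; (iv) with $f:=h^{n-1}$, $\int_0^b t f(t)\,dt=M$. Then $\mathcal{H}\neq\emptyset$ if and only if $m\ge -1/\sqrt{Mn(n+1)}$. In that case, setting $\mu(h):=\int_0^b f(t)\,dt$ for $h\in\mathcal{H}$: the minimum of $\mu$ over $\mathcal{H}$ is attained, and it is attained exactly at those $h$ which are affine on their support $[0,b]$ with $h(b)=0$; the maximum of $\mu$ over $\mathcal{H}$ is attained, and it is attained exactly at those $h$ with $h(t)=1+mt$ for all $t$ in the support of $h$. *)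

(* Defs.v *)
From Stdlib Require Import Reals ClassicalEpsilon.
Open Scope R_scope.

Definition in_closure (S : R -> Prop) (x : R) : Prop :=
  forall eps, 0 < eps -> exists y, S y /\ Rabs (y - x) < eps.

Definition support_is (h : R -> R) (b : R) : Prop :=
  forall x, in_closure (fun y => 0 < h y) x <-> 0 <= x <= b.

Definition continuous_on (h : R -> R) (a b : R) : Prop :=
  forall x, a <= x <= b -> limit1_in h (fun y => a <= y <= b) (h x) x.

Definition concave_on (h : R -> R) (a b : R) : Prop :=
  forall x y l, a <= x <= b -> a <= y <= b -> 0 <= l <= 1 ->
    l * h x + (1 - l) * h y <= h (l * x + (1 - l) * y).

Definition right_deriv0_le (h : R -> R) (m : R) : Prop :=
  exists d, limit1_in (fun t => (h t - h 0) / t) (fun t => 0 < t) d 0 /\ d <= m.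

Definition integral_is (f : R -> R) (a b v : R) : Prop :=
  exists pr : Riemann_integrable f a b, RiemannInt pr = v.

(* Riemann integral as a total function (meaningful when f is integrable) *)
Definition Rint (f : R -> R) (a b : R) : R :=
  epsilon (inhabits 0) (fun v => integral_is f a b v).

Definition inH (M m : R) (n : nat) (h : R -> R) (b : R) : Prop :=
  0 < b /\
  (forall x, 0 <= h x) /\
  support_is h b /\
  continuous_on h 0 b /\
  concave_on h 0 b /\
  h 0 = 1 /\
  right_deriv0_le h m /\
  integral_is (fun t => t * h t ^ (n - 1)) 0 b M.

Definition mu (n : nat) (h : R -> R) (b : R) : R :=
  Rint (fun t => h t ^ (n - 1)) 0 b.

(* Main.v *)
Require Import Defs.
From Stdlib Require Import Reals ClassicalEpsilon.
From Coquelicot Require Import Coquelicot.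
Require Import Defs.
From Stdlib Require Import Lra Lia Classical FunctionalExtensionality.
Open Scope R_scope.

Lemma cont_pow (f : R -> R) (x : R) (p : nat) :
  continuity_pt f x -> continuity_pt (fun t => f t ^ p) x.
Proof.
intros Hf. induction p as [|p IH].
- simpl. apply continuity_pt_const. intros a b'. reflexivity.
- simpl. apply (continuity_pt_mult f (fun t => f t ^ p)); auto.
Qed.

Lemma pow_lt_nn (x y : R) (p : nat) : 0 <= x < y -> (1 <= p)%nat -> x ^ p < y ^ p.
Proof.
intros Hxy Hp. destruct p as [|q]; [lia|]. simpl.
assert (H1 : x ^ q <= y ^ q) by (apply pow_incr; lra).
assert (H2 : 0 < y ^ q) by (apply pow_lt; lra).
assert (H3 : 0 <= x ^ q) by (apply pow_le; lra).
nra.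
Qed.

Lemma pow_inj_nn (x y : R) (p : nat) : 0 <= x -> 0 <= y -> (1 <= p)%nat -> x ^ p = y ^ p -> x = y.
Proof.
intros Hx Hy Hp He. destruct (Rtotal_order x y) as [H|[H|H]]; auto.
- pose proof (pow_lt_nn x y p (conj Hx H) Hp). lra.
- pose proof (pow_lt_nn y x p (conj Hy H) Hp). lra.
Qed.

Lemma pow_pos_p (x : R) (p : nat) : 0 < x -> 0 < x ^ p.
Proof. intros; apply pow_lt; auto. Qed.

Lemma Rint_eq (f : R -> R) (a b : R) : Riemann_integrable f a b -> Rint f a b = RInt f a b.
Proof.
intros pr. unfold Rint.
destruct (epsilon_spec (inhabits 0) (fun v => integral_is f a b v)) as [pr' Hpr'].
- exists (RiemannInt pr). exists pr. reflexivity.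
- rewrite <- Hpr'. symmetry. apply RInt_Reals.
Qed.

Lemma three_pts (y1 y2 y3 p q : R) : y1 < y2 -> y2 < y3 ->
  exists y, (y = y1 \/ y = y2 \/ y = y3) /\ y <> p /\ y <> q.
Proof.
intros H1 H2.
destruct (Req_dec y1 p); destruct (Req_dec y1 q);
destruct (Req_dec y2 p); destruct (Req_dec y2 q);
destruct (Req_dec y3 p); destruct (Req_dec y3 q);
first [ solve [exists y1; split; [auto|split; auto]]
      | solve [exists y2; split; [auto|split; auto]]
      | solve [exists y3; split; [auto|split; auto]]
      | exfalso; subst; lra ].
Qed.

Lemma cont_pt_intro (f : R -> R) (x : R) :
  (forall eps, 0 < eps -> exists d, 0 < d /\ forall y, Rabs (y - x) < d -> Rabs (f y - f x) < eps) ->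
  continuity_pt f x.
Proof.
intros H eps Heps. destruct (H eps Heps) as [d [Hd Hy]]. exists d; split; auto.
intros y [_ Hyd]. simpl. unfold Rdist. apply Hy. exact Hyd.
Qed.

Lemma cont_pt_elim (f : R -> R) (x : R) : continuity_pt f x ->
  forall eps, 0 < eps -> exists d, 0 < d /\ forall y, Rabs (y - x) < d -> Rabs (f y - f x) < eps.
Proof.
intros H eps Heps. destruct (H eps Heps) as [d [Hd Hy]]. exists d; split; auto.
intros y Hyd. destruct (Req_dec x y) as [e|ne].
- subst. rewrite Rminus_diag, Rabs_R0. lra.
- apply (Hy y). split; [split; [exact I|exact ne]|exact Hyd].
Qed.

Lemma lim_on_elim (h : R -> R) (a b x : R) : continuous_on h a b -> a <= x <= b ->
  forall eps, 0 < eps -> exists d, 0 < d /\ forall y, a <= y <= b -> Rabs (y - x) < d -> Rabs (h y - h x) < eps.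
Proof.
intros H Hx eps Heps. destruct (H x Hx eps Heps) as [d [Hd Hy]]. exists d; split; auto.
intros y Hy1 Hy2. apply (Hy y). split; auto.
Qed.

Lemma zero_int (phi : R -> R) (a L x : R) : a < L -> ex_RInt phi a L -> RInt phi a L <= 0 ->
  (forall t, a < t < L -> 0 <= phi t) -> a < x < L -> continuity_pt phi x -> phi x <= 0.
Proof.
intros HaL Hex Hint Hpos Hx Hc.
destruct (Rle_or_lt (phi x) 0) as [H|H]; auto. exfalso.
destruct (cont_pt_elim phi x Hc (phi x / 2)) as [alp [Halp Hy]]; [lra|].
set (d := Rmin alp (Rmin (x - a) (L - x)) / 2).
assert (Hd1 : 0 < d). { unfold d. apply Rmin_glb_lt; [lra|apply Rmin_glb_lt; lra] || idtac.
  assert (0 < Rmin alp (Rmin (x - a) (L - x))) by (apply Rmin_glb_lt; [lra|apply Rmin_glb_lt; lra]). lra. }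
assert (Hd2 : d < alp) by (unfold d; pose proof (Rmin_l alp (Rmin (x - a) (L - x))); lra).
assert (Hd3 : d < x - a) by (unfold d; pose proof (Rmin_r alp (Rmin (x - a) (L - x))); pose proof (Rmin_l (x-a) (L-x)); lra).
assert (Hd4 : d < L - x) by (unfold d; pose proof (Rmin_r alp (Rmin (x - a) (L - x))); pose proof (Rmin_r (x-a) (L-x)); lra).
set (u := x - d). set (v := x + d).
assert (E1 : ex_RInt phi a u) by (apply (ex_RInt_Chasles_1 phi a u L); [unfold u; lra|auto]).
assert (E2 : ex_RInt phi u L) by (apply (ex_RInt_Chasles_2 phi a u L); [unfold u; lra|auto]).
assert (E3 : ex_RInt phi u v) by (apply (ex_RInt_Chasles_1 phi u v L); [unfold u, v; lra|auto]).
assert (E4 : ex_RInt phi v L) by (apply (ex_RInt_Chasles_2 phi u v L); [unfold u, v; lra|auto]).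
pose proof (RInt_Chasles phi a u L E1 E2) as C1.
pose proof (RInt_Chasles phi u v L E3 E4) as C2.
assert (P1 : 0 <= RInt phi a u) by (apply RInt_ge_0; auto; [unfold u; lra| intros t Ht; apply Hpos; unfold u in Ht; lra]).
assert (P2 : 0 <= RInt phi v L) by (apply RInt_ge_0; auto; [unfold v; lra| intros t Ht; apply Hpos; unfold v in Ht; lra]).
assert (P3 : RInt (fun _ => phi x / 2) u v <= RInt phi u v).
{ apply RInt_le; auto. unfold u, v; lra. apply ex_RInt_const.
  intros t Ht. destruct (Req_dec t x) as [e|ne]. subst; lra.
  assert (Rabs (t - x) < alp). { unfold u, v in Ht. apply Rabs_def1; lra. }
  specialize (Hy t H0). apply Rabs_def2 in Hy. lra. }
rewrite RInt_const in P3. change (scal (v - u) (phi x / 2)) with ((v - u) * (phi x / 2)) in P3.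
change (plus (RInt phi a u) (RInt phi u L) = RInt phi a L) in C1.
change (RInt phi a u + RInt phi u L = RInt phi a L) in C1.
change (RInt phi u v + RInt phi v L = RInt phi u L) in C2.
assert (0 < (v - u) * (phi x / 2)) by (apply Rmult_lt_0_compat; unfold u, v; lra).
lra.
Qed.

Section S.
Variables (M m : R) (n : nat) (h : R -> R) (b : R).
Hypothesis Hn : (2 <= n)%nat.
Hypothesis HH : inH M m n h b.

Lemma H_b : 0 < b. Proof. apply HH. Qed.
Lemma H_nn : forall x, 0 <= h x. Proof. apply HH. Qed.
Lemma H_0 : h 0 = 1. Proof. apply HH. Qed.

Lemma H_zero : forall x, ~ (0 <= x <= b) -> h x = 0.
Proof.
intros x Hx. destruct HH as [_ [Hnn [Hs _]]].
destruct (Rle_lt_or_eq_dec 0 (h x) (Hnn x)) as [Hp|He]; [|auto].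
exfalso. apply Hx. apply (Hs x). intros eps Heps. exists x. split; auto.
rewrite Rminus_diag, Rabs_R0. lra.
Qed.

Lemma H_chord : forall s t, 0 < s <= b -> 0 <= t <= s -> (t/s) * h s + (1 - t/s) <= h t.
Proof.
intros s t Hs Ht. destruct HH as [Hb [_ [_ [_ [Hc [H0 _]]]]]].
pose proof (Hc s 0 (t/s)) as C.
assert (Hl : 0 <= t / s <= 1).
{ split. apply Rdiv_le_0_compat; lra.
  apply Rmult_le_reg_r with s; [lra|]; unfold Rdiv; rewrite Rmult_assoc, Rinv_l; lra. }
rewrite H0 in C. replace (t / s * s + (1 - t / s) * 0) with t in C by (field; lra).
replace (t / s * h s + (1 - t / s)) with (t / s * h s + (1 - t / s) * 1) by ring.
apply C; lra.
Qed.

Lemma H_lower : forall t, 0 <= t <= b -> 1 - t/b <= h t.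
Proof.
intros t Ht. pose proof (H_chord b t (conj H_b (Rle_refl b)) Ht).
pose proof (H_nn b). assert (0 <= t / b) by (apply Rdiv_le_0_compat; pose proof H_b; lra).
nra.
Qed.

Lemma H_pos : forall t, 0 <= t < b -> 0 < h t.
Proof.
intros t Ht. pose proof (H_lower t ltac:(lra)). pose proof H_b.
assert (t / b < 1) by (apply Rmult_lt_reg_r with b; [lra|]; unfold Rdiv; rewrite Rmult_assoc, Rinv_l; lra). lra.
Qed.

Lemma H_upper : forall t, 0 <= t <= b -> h t <= 1 + m * t.
Proof.
intros t Ht. destruct (Req_dec t 0) as [e|ne].
{ subst. rewrite H_0. lra. }
assert (Ht0 : 0 < t) by (destruct Ht as [[Ht1|Ht1] _]; [auto|congruence]).
destruct (Rle_or_lt (h t) (1 + m * t)) as [H|H]; auto. exfalso.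
destruct HH as [Hb [_ [_ [_ [_ [H0 [Hd _]]]]]]].
destruct Hd as [d [Hlim Hdm]].
set (q := (h t - 1) / t).
assert (Hq : m < q). { unfold q. apply Rmult_lt_reg_r with t; [lra|]. unfold Rdiv. rewrite Rmult_assoc, Rinv_l by lra. lra. }
destruct (Hlim (q - d)) as [alp [Halp Ha]]; [lra|].
set (s := Rmin (alp/2) (t/2)).
assert (Hs0 : 0 < s) by (unfold s; apply Rmin_glb_lt; lra).
assert (Hs1 : s < t) by (unfold s; pose proof (Rmin_r (alp/2) (t/2)); lra).
assert (Hs2 : s < alp) by (unfold s; pose proof (Rmin_l (alp/2) (t/2)); lra).
specialize (Ha s). simpl in Ha. unfold Rdist in Ha.
assert (Hs3 : Rabs ((h s - h 0) / s - d) < q - d).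
{ apply Ha. split; auto. rewrite Rminus_0_r, Rabs_right; lra. }
assert (C : (s / t) * h t + (1 - s / t) <= h s) by (apply H_chord; lra).
assert (Hqs : q <= (h s - 1) / s).
{ unfold q. apply (Rmult_le_reg_r (s * t)); [nra|].
  replace ((h t - 1) / t * (s * t)) with ((h t - 1) * s) by (field; lra).
  replace ((h s - 1) / s * (s * t)) with ((h s - 1) * t) by (field; lra).
  replace (s / t * h t + (1 - s / t)) with (1 + s * (h t - 1) / t) in C by (field; lra).
  assert (s * (h t - 1) / t * t = s * (h t - 1)) by (field; lra).
  nra. }
rewrite H0 in Hs3. apply Rabs_def2 in Hs3. lra.
Qed.

Lemma H_cont_h : forall x, 0 < x < b -> continuity_pt h x.
Proof.
intros x Hx. apply cont_pt_intro. intros eps Heps.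
destruct HH as [_ [_ [_ [Hc _]]]].
destruct (lim_on_elim h 0 b x Hc ltac:(lra) eps Heps) as [d [Hd Hy]].
exists (Rmin d (Rmin x (b - x))). split.
- apply Rmin_glb_lt; [lra|apply Rmin_glb_lt; lra].
- intros y Hyx. pose proof (Rmin_l d (Rmin x (b - x))). pose proof (Rmin_r d (Rmin x (b - x))).
  pose proof (Rmin_l x (b - x)). pose proof (Rmin_r x (b - x)).
  apply Rabs_def2 in Hyx as Hyx'. apply Hy; [lra|lra].
Qed.

Lemma H_cont_F : forall x, 0 < x -> x <> b -> continuity_pt (fun t => h t ^ (n - 1)) x.
Proof.
intros x Hx Hxb. destruct (Rlt_or_le x b) as [Hl|Hl].
- apply cont_pow. apply H_cont_h. lra.
- apply cont_pt_intro. intros eps Heps. exists (x - b). split; [lra|].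
  intros y Hy. apply Rabs_def2 in Hy.
  rewrite (H_zero y) by lra. rewrite (H_zero x) by lra. rewrite Rminus_diag, Rabs_R0. lra.
Qed.

Definition clamp (t : R) := Rmin b (Rmax 0 t).

Lemma clamp_in : forall t, 0 <= clamp t <= b.
Proof.
intros t. unfold clamp, Rmin, Rmax. pose proof H_b.
destruct (Rle_dec 0 t); destruct (Rle_dec b _); lra.
Qed.

Lemma clamp_lip : forall s t, Rabs (clamp s - clamp t) <= Rabs (s - t).
Proof.
intros s t. unfold clamp, Rmin, Rmax.
destruct (Rle_dec 0 s); destruct (Rle_dec 0 t);
repeat match goal with |- context [Rle_dec ?a ?c] => destruct (Rle_dec a c) end;
unfold Rabs; repeat match goal with |- context [Rcase_abs ?a] => destruct (Rcase_abs a) end; lra.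
Qed.

Lemma clamp_id : forall t, 0 <= t <= b -> clamp t = t.
Proof.
intros t Ht. unfold clamp, Rmin, Rmax.
destruct (Rle_dec 0 t); [|lra]. destruct (Rle_dec b t); lra.
Qed.

Lemma cont_clamp : forall x, continuity_pt (fun t => h (clamp t)) x.
Proof.
intros x. apply cont_pt_intro. intros eps Heps.
destruct HH as [_ [_ [_ [Hc _]]]].
destruct (lim_on_elim h 0 b (clamp x) Hc (clamp_in x) eps Heps) as [d [Hd Hy]].
exists d. split; auto. intros y Hyx. apply Hy. apply clamp_in.
pose proof (clamp_lip y x). lra.
Qed.

Lemma H_exRInt : forall L, b <= L ->
  ex_RInt (fun t => h t ^ (n - 1)) 0 L /\ ex_RInt (fun t => t * h t ^ (n - 1)) 0 L.
Proof.
intros L HL. pose proof H_b.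
assert (Cf : forall x, continuity_pt (fun t => h (clamp t) ^ (n - 1)) x).
{ intros x. apply cont_pow. apply cont_clamp. }
assert (Cg : forall x, continuity_pt (fun t => t * h (clamp t) ^ (n - 1)) x).
{ intros x. apply (continuity_pt_mult (fun t => t) (fun t => h (clamp t) ^ (n - 1))).
  apply derivable_continuous_pt, derivable_pt_id. apply Cf. }
assert (Z : forall (f : R -> R), (forall t, b < t -> f t = 0) -> ex_RInt f b L).
{ intros f Hf. apply (ex_RInt_ext (fun _ => 0)). intros t Ht.
  rewrite Rmin_left in Ht by lra. rewrite Rmax_right in Ht by lra. rewrite Hf; [auto|lra].
  apply ex_RInt_const. }
split.
- apply (ex_RInt_Chasles _ 0 b L).
  + apply (ex_RInt_ext (fun t => h (clamp t) ^ (n - 1))).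
    { intros t Ht. rewrite Rmin_left in Ht by lra. rewrite Rmax_right in Ht by lra.
      rewrite clamp_id; [auto|lra]. }
    apply (ex_RInt_continuous (V:=R_CompleteNormedModule)). intros z _. apply continuity_pt_filterlim. apply Cf.
  + apply Z. intros t Ht. rewrite H_zero by lra. apply pow_i. lia.
- apply (ex_RInt_Chasles _ 0 b L).
  + apply (ex_RInt_ext (fun t => t * h (clamp t) ^ (n - 1))).
    { intros t Ht. rewrite Rmin_left in Ht by lra. rewrite Rmax_right in Ht by lra.
      rewrite clamp_id; [auto|lra]. }
    apply (ex_RInt_continuous (V:=R_CompleteNormedModule)). intros z _. apply continuity_pt_filterlim. apply Cg.
  + apply Z. intros t Ht. rewrite H_zero by lra. rewrite pow_i by lia. ring.
Qed.

Lemma tail_zero : forall (f : R -> R) L, b <= L -> (forall t, b < t -> f t = 0) -> RInt f b L = 0.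
Proof.
intros f L HL Hf. rewrite (RInt_ext f (fun _ => 0)).
- rewrite RInt_const. change ((L - b) * 0 = 0). ring.
- intros t Ht. rewrite Rmin_left in Ht by lra. rewrite Rmax_right in Ht by lra. apply Hf; lra.
Qed.

Lemma H_RInt : forall L, b <= L ->
  RInt (fun t => h t ^ (n - 1)) 0 L = mu n h b /\ RInt (fun t => t * h t ^ (n - 1)) 0 L = M.
Proof.
intros L HL. pose proof H_b.
destruct (H_exRInt L HL) as [E1 E2]. destruct (H_exRInt b (Rle_refl b)) as [E1b E2b].
assert (E1' : ex_RInt (fun t => h t ^ (n - 1)) b L) by (apply (ex_RInt_Chasles_2 (V:=R_CompleteNormedModule) _ 0 b L); [lra|auto]).
assert (E2' : ex_RInt (fun t => t * h t ^ (n - 1)) b L) by (apply (ex_RInt_Chasles_2 (V:=R_CompleteNormedModule) _ 0 b L); [lra|auto]).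
split.
- rewrite <- (RInt_Chasles (V:=R_CompleteNormedModule) _ 0 b L E1b E1').
  rewrite (tail_zero _ L HL). 2: { intros t Ht. rewrite H_zero by lra. apply pow_i. lia. }
  unfold mu. rewrite Rint_eq. change (RInt (fun t : R => h t ^ (n - 1)) 0 b + 0 = RInt (fun t : R => h t ^ (n - 1)) 0 b). ring.
  apply ex_RInt_Reals_0. auto.
- rewrite <- (RInt_Chasles (V:=R_CompleteNormedModule) _ 0 b L E2b E2').
  rewrite (tail_zero _ L HL). 2: { intros t Ht. rewrite H_zero by lra. rewrite pow_i by lia. ring. }
  destruct HH as [_ [_ [_ [_ [_ [_ [_ [pr Hpr]]]]]]]].
  rewrite (RInt_Reals _ _ _ pr), Hpr. change (M + 0 = M). ring.
Qed.

End S.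

Lemma eq_extend (h : R -> R) (b s p q : R) : 0 < b -> continuous_on h 0 b ->
  (forall t, 0 < t < b -> t <> p -> t <> q -> h t = 1 + s * t) ->
  forall x, 0 <= x <= b -> h x = 1 + s * x.
Proof.
intros Hb Hc Heq x Hx.
destruct (Req_dec (h x) (1 + s * x)) as [e|ne]; auto. exfalso.
set (de := Rabs (h x - (1 + s * x))).
assert (Hde : 0 < de) by (apply Rabs_pos_lt; lra).
destruct (lim_on_elim h 0 b x Hc Hx (de/2)) as [alp [Halp Hy]]; [lra|].
set (r := Rmin alp (de / (2 * (Rabs s + 1)))).
assert (Hs1 : 0 < Rabs s + 1) by (pose proof (Rabs_pos s); lra).
assert (Hr : 0 < r) by (unfold r; apply Rmin_glb_lt; [lra|apply Rdiv_lt_0_compat; lra]).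
assert (Hr1 : r <= alp) by apply Rmin_l.
assert (Hr2 : r <= de / (2 * (Rabs s + 1))) by apply Rmin_r.
set (al := Rmax 0 (x - r)). set (be := Rmin b (x + r)).
assert (Hab : al < be).
{ unfold al, be, Rmax, Rmin. destruct (Rle_dec 0 (x - r)); destruct (Rle_dec b (x + r)); lra. }
assert (Hal : 0 <= al /\ x - r <= al) by (unfold al; split; [apply Rmax_l|apply Rmax_r]).
assert (Hbe : be <= b /\ be <= x + r) by (unfold be; split; [apply Rmin_l|apply Rmin_r]).
destruct (three_pts (al + (be - al)/4) (al + 2*(be - al)/4) (al + 3*(be-al)/4) p q) as [y [Hy1 [Hyp Hyq]]]; try lra.
assert (Hyi : al < y < be) by lra.
assert (Hyx : Rabs (y - x) < r) by (apply Rabs_def1; lra).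
specialize (Heq y ltac:(lra) Hyp Hyq).
specialize (Hy y ltac:(lra) ltac:(lra)). rewrite Heq in Hy.
assert (Hsy : Rabs (s * y - s * x) <= Rabs s * r).
{ replace (s * y - s * x) with (s * (y - x)) by ring. rewrite Rabs_mult.
  apply Rmult_le_compat_l; [apply Rabs_pos|lra]. }
assert (Hsr : Rabs s * r < de / 2).
{ apply Rle_lt_trans with (Rabs s * (de / (2 * (Rabs s + 1)))).
  apply Rmult_le_compat_l; [apply Rabs_pos|lra].
  apply Rmult_lt_reg_r with (2 * (Rabs s + 1)); [lra|].
  field_simplify; [|lra]. pose proof (Rabs_pos s). nra. }
assert (Htri : de <= Rabs (1 + s * y - h x) + Rabs (s * y - s * x)).
{ unfold de. replace (h x - (1 + s * x)) with (-(1 + s * y - h x) + (s * y - s * x)) by ring.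
  eapply Rle_trans; [apply Rabs_triang|]. rewrite Rabs_Ropp. lra. }
lra.
Qed.

Lemma support_intro (h : R -> R) (b : R) : 0 < b ->
  (forall x, ~ (0 <= x <= b) -> h x = 0) -> (forall x, 0 <= x < b -> 0 < h x) -> support_is h b.
Proof.
intros Hb Hz Hp x. split.
- intros Hcl. destruct (Rlt_or_le x 0) as [H|H].
  + destruct (Hcl (- x)) as [y [Hy1 Hy2]]; [lra|].
    destruct (Rle_dec 0 y); [destruct (Rle_dec y b)|].
    * apply Rabs_def2 in Hy2. lra.
    * rewrite Hz in Hy1 by lra. lra.
    * rewrite Hz in Hy1 by lra. lra.
  + destruct (Rle_or_lt x b) as [H'|H']; [lra|].
    destruct (Hcl (x - b)) as [y [Hy1 Hy2]]; [lra|].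
    destruct (Rle_dec 0 y); [destruct (Rle_dec y b)|].
    * apply Rabs_def2 in Hy2. lra.
    * rewrite Hz in Hy1 by lra. lra.
    * rewrite Hz in Hy1 by lra. lra.
- intros Hx eps Heps. destruct (Rlt_or_le x b) as [H|H].
  + exists x. split; [apply Hp; lra|]. rewrite Rminus_diag, Rabs_R0. lra.
  + exists (Rmax 0 (b - eps/2)). split.
    * apply Hp. split; [apply Rmax_l|]. unfold Rmax; destruct (Rle_dec 0 (b - eps/2)); lra.
    * apply Rabs_def1; unfold Rmax; destruct (Rle_dec 0 (b - eps/2)); lra.
Qed.

Definition aff (s c : R) (t : R) : R :=
  if Rle_dec 0 t then if Rle_dec t c then 1 + s * t else 0 else 0.

Lemma aff_in (s c t : R) : 0 <= t <= c -> aff s c t = 1 + s * t.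
Proof. intros Ht. unfold aff. destruct (Rle_dec 0 t); [destruct (Rle_dec t c)|]; lra. Qed.

Lemma aff_out (s c t : R) : ~ (0 <= t <= c) -> aff s c t = 0.
Proof. intros Ht. unfold aff. destruct (Rle_dec 0 t); [destruct (Rle_dec t c)|]; auto; lra. Qed.

Lemma aff_pos (s c t : R) : 0 < c -> 0 <= 1 + s * c -> 0 <= t < c -> 0 < 1 + s * t.
Proof.
intros Hc H Ht. destruct (Rle_or_lt 0 s) as [Hs|Hs]; [nra|].
assert (s * c < s * t) by (apply Rmult_lt_gt_compat_neg_l; lra). lra.
Qed.

Lemma aff_inH (M m : R) (n : nat) (s c : R) : (2 <= n)%nat -> 0 < c -> s <= m -> 0 <= 1 + s * c ->
  is_RInt (fun t => t * (1 + s * t) ^ (n - 1)) 0 c M -> inH M m n (aff s c) c.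
Proof.
intros Hn Hc Hsm Hsc HI.
assert (Hnn : forall t, 0 <= t <= c -> 0 <= 1 + s * t).
{ intros t Ht. destruct (Req_dec t c) as [e|ne]. subst; auto.
  apply Rlt_le, aff_pos with c; auto; lra. }
split; [auto|]. split.
{ intros x. destruct (Rle_dec 0 x); [destruct (Rle_dec x c)|].
  - rewrite aff_in by lra. apply Hnn; lra.
  - rewrite aff_out by lra. lra.
  - rewrite aff_out by lra. lra. }
split.
{ apply support_intro; auto. apply aff_out. intros x Hx. rewrite aff_in by lra. apply aff_pos with c; auto. }
split.
{ intros x Hx eps Heps. exists (eps / (Rabs s + 1)).
  assert (0 < Rabs s + 1) by (pose proof (Rabs_pos s); lra).
  split. apply Rdiv_lt_0_compat; lra.
  intros y [Hy1 Hy2]. simpl in *. unfold Rdist in *.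
  rewrite !aff_in by lra. replace (1 + s * y - (1 + s * x)) with (s * (y - x)) by ring.
  rewrite Rabs_mult. apply Rle_lt_trans with ((Rabs s + 1) * Rabs (y - x)).
  pose proof (Rabs_pos (y - x)). nra.
  apply Rmult_lt_reg_r with (/ (Rabs s + 1)). apply Rinv_0_lt_compat; lra.
  replace ((Rabs s + 1) * Rabs (y - x) * / (Rabs s + 1)) with (Rabs (y - x)) by (field; lra). exact Hy2. }
split.
{ intros x y l Hx Hy Hl. rewrite !aff_in by (auto || nra). right. ring. }
split.
{ rewrite aff_in by lra. ring. }
split.
{ exists s. split; auto. intros eps Heps. exists c. split; [lra|].
  intros t [Ht1 Ht2]. simpl in *. unfold Rdist in *. rewrite Rminus_0_r in Ht2.
  rewrite Rabs_right in Ht2 by lra.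
  rewrite !aff_in by lra. replace ((1 + s * t - (1 + s * 0)) / t - s) with 0 by (field; lra).
  rewrite Rabs_R0. lra. }
assert (Hex : ex_RInt (fun t => t * aff s c t ^ (n - 1)) 0 c).
{ apply (ex_RInt_ext (fun t => t * (1 + s * t) ^ (n - 1))).
  intros t Ht. rewrite Rmin_left in Ht by lra. rewrite Rmax_right in Ht by lra. rewrite aff_in by lra. auto.
  exists M. auto. }
exists (ex_RInt_Reals_0 _ _ _ Hex). rewrite <- RInt_Reals.
rewrite (RInt_ext _ (fun t => t * (1 + s * t) ^ (n - 1))).
apply is_RInt_unique. auto.
intros t Ht. rewrite Rmin_left in Ht by lra. rewrite Rmax_right in Ht by lra. rewrite aff_in by lra. auto.
Qed.

Lemma lin_comb (f g u v : R -> R) (a b If Ig Iu Iv T : R) :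
  is_RInt f a b If -> is_RInt g a b Ig -> is_RInt u a b Iu -> is_RInt v a b Iv ->
  is_RInt (fun t => (T * f t - u t) - (T * g t - v t)) a b ((T * If - Iu) - (T * Ig - Iv)).
Proof.
intros Hf Hg Hu Hv.
apply (is_RInt_minus (V:=R_NormedModule)); apply (is_RInt_minus (V:=R_NormedModule)); auto;
apply (is_RInt_scal (V:=R_NormedModule)); auto.
Qed.

Lemma cont_comb (F G : R -> R) (T t : R) : continuity_pt F t -> continuity_pt G t ->
  continuity_pt (fun x => (T * F x - x * F x) - (T * G x - x * G x)) t.
Proof.
intros HF HG.
assert (Hid : continuity_pt (fun x => x) t) by (apply derivable_continuous_pt, derivable_pt_id).
assert (Hc : continuity_pt (fun _ => T) t) by (apply continuity_pt_const; intros ? ?; auto).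
apply (continuity_pt_minus (fun x => T * F x - x * F x) (fun x => T * G x - x * G x));
apply (continuity_pt_minus (fun x => T * _ x) (fun x => x * _ x));
first [apply (continuity_pt_mult (fun _ => T) F) | apply (continuity_pt_mult (fun _ => T) G)
      | apply (continuity_pt_mult (fun x => x) F) | apply (continuity_pt_mult (fun x => x) G)]; auto.
Qed.

Lemma RInt_is (M m : R) (n : nat) (h : R -> R) (b L : R) : (2 <= n)%nat -> inH M m n h b -> b <= L ->
  is_RInt (fun t => h t ^ (n - 1)) 0 L (mu n h b) /\ is_RInt (fun t => t * h t ^ (n - 1)) 0 L M.
Proof.
intros Hn HH HL. destruct (H_exRInt M m n h b Hn HH L HL) as [E1 E2].
destruct (H_RInt M m n h b Hn HH L HL) as [R1 R2].
split; [rewrite <- R1|rewrite <- R2]; apply (RInt_correct (V:=R_CompleteNormedModule)); auto.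
Qed.

Lemma min_core (M m : R) (n : nat) (h : R -> R) (b : R) (h0 : R -> R) (c : R) :
  (2 <= n)%nat -> inH M m n h b -> inH M m n h0 c ->
  (forall t, 0 <= t <= c -> h0 t = 1 - t / c) -> mu n h b <= mu n h0 c ->
  (forall t, 0 <= t <= b -> h t = 1 - t / c) /\ b = c.
Proof.
intros Hn HH H0 Hh0 Hmu.
pose proof (H_b M m n h b HH) as Hb. pose proof (H_b M m n h0 c H0) as Hc.
set (L := Rmax b c).
assert (HbL : b <= L) by apply Rmax_l. assert (HcL : c <= L) by apply Rmax_r.
set (F := fun t => h t ^ (n - 1)). set (G := fun t => h0 t ^ (n - 1)).
set (E := fun t => 0 <= t <= b /\ 1 - t / c <= h t).
destruct (completeness E) as [T [HTub HTlub]].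
{ exists b. intros t Ht. apply Ht. }
{ exists 0. split; [lra|]. rewrite (H_0 M m n h b HH). unfold Rdiv; rewrite Rmult_0_l; lra. }
assert (HT0 : 0 <= T). { apply HTub. split; [lra|]. rewrite (H_0 M m n h b HH). unfold Rdiv; rewrite Rmult_0_l; lra. }
assert (HTb : T <= b). { apply HTlub. intros t Ht. apply Ht. }
assert (P1 : forall t, 0 <= t < T -> 1 - t / c <= h t).
{ intros t Ht. destruct (classic (exists s, E s /\ t < s)) as [[s [Es Hts]]|Hno].
  - destruct Es as [Hs1 Hs2].
    pose proof (H_chord M m n h b HH s t ltac:(lra) ltac:(lra)) as Ch.
    assert (Hts0 : 0 <= t / s) by (apply Rdiv_le_0_compat; lra).
    assert (t / s * (1 - s / c) <= t / s * h s) by (apply Rmult_le_compat_l; auto).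
    replace (1 - t / c) with (t / s * (1 - s / c) + (1 - t / s)) by (field; lra). lra.
  - exfalso. assert (T <= t). { apply HTlub. intros s Es. apply Rnot_lt_le. intros Hlt. apply Hno. exists s. auto. }
    lra. }
assert (P2 : forall t, T < t <= b -> h t < 1 - t / c).
{ intros t Ht. apply Rnot_le_lt. intros Hle. assert (t <= T) by (apply HTub; split; [lra|auto]). lra. }
destruct (RInt_is M m n h b L Hn HH HbL) as [I1 I2].
destruct (RInt_is M m n h0 c L Hn H0 HcL) as [I3 I4].
set (phi := fun t => (T * F t - t * F t) - (T * G t - t * G t)).
assert (Iphi : is_RInt phi 0 L ((T * mu n h b - M) - (T * mu n h0 c - M))) by (apply lin_comb; auto).
assert (Hint : RInt phi 0 L <= 0).
{ rewrite (is_RInt_unique _ _ _ _ Iphi). assert (T * mu n h b <= T * mu n h0 c) by (apply Rmult_le_compat_l; auto). lra. }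
assert (Hex : ex_RInt phi 0 L) by (eexists; eauto).
assert (Fnn : forall t, 0 <= F t) by (intros t; apply pow_le, (H_nn M m n h b HH)).
assert (Gnn : forall t, 0 <= G t) by (intros t; apply pow_le, (H_nn M m n h0 c H0)).
assert (Fout : forall t, b < t -> F t = 0) by (intros t Ht; unfold F; rewrite (H_zero M m n h b HH) by lra; apply pow_i; lia).
assert (Gout : forall t, c < t -> G t = 0) by (intros t Ht; unfold G; rewrite (H_zero M m n h0 c H0) by lra; apply pow_i; lia).
assert (Gin : forall t, 0 <= t <= c -> G t = (1 - t / c) ^ (n - 1)) by (intros t Ht; unfold G; rewrite Hh0; auto).
assert (ell_nn : forall t, 0 <= t <= c -> 0 <= 1 - t / c).
{ intros t Ht. assert (t / c <= 1); [|lra]. apply Rmult_le_reg_r with c; [lra|]. unfold Rdiv. rewrite Rmult_assoc, Rinv_l; lra. }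
assert (phiE : forall t, phi t = (F t - G t) * (T - t)) by (intros t; unfold phi; ring).
assert (Hpos : forall t, 0 < t < L -> 0 <= phi t).
{ intros t Ht. rewrite phiE. destruct (Rtotal_order t T) as [Hlt|[Heq|Hgt]].
  - apply Rmult_le_pos; [|lra].
    assert (Hl : 1 - t / c <= h t) by (apply P1; lra).
    destruct (Rle_or_lt t c) as [Htc|Htc].
    + rewrite Gin by lra. unfold F. assert ((1 - t / c) ^ (n - 1) <= h t ^ (n - 1)); [|lra].
      apply pow_incr. split; auto. apply ell_nn; lra.
    + rewrite Gout by lra. specialize (Fnn t). lra.
  - subst. rewrite Rminus_diag. lra.
  - destruct (Rle_or_lt t b) as [Htb|Htb].
    + assert (Hl : h t < 1 - t / c) by (apply P2; lra).
      pose proof (H_nn M m n h b HH t).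
      assert (Htc : t < c).
      { apply Rnot_le_lt. intros Hct. assert (1 <= t / c) by (apply Rmult_le_reg_r with c; [lra|]; unfold Rdiv; rewrite Rmult_assoc, Rinv_l; lra). lra. }
      rewrite Gin by lra. unfold F.
      assert (h t ^ (n - 1) <= (1 - t / c) ^ (n - 1)) by (apply pow_incr; lra).
      nra.
    + rewrite Fout by lra. specialize (Gnn t). nra. }
assert (Hcont : forall t, 0 < t -> t <> b -> t <> c -> continuity_pt phi t).
{ intros t Ht Htb Htc. apply cont_comb.
  eapply H_cont_F; eauto. eapply H_cont_F; eauto. }
assert (Hzero : forall t, 0 < t < L -> t <> b -> t <> c -> phi t = 0).
{ intros t Ht Htb Htc. apply Rle_antisym.
  apply (zero_int phi 0 L t); auto; try lra. apply Hcont; auto; lra. apply Hpos; auto. }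
assert (ClA : forall t, 0 < t < b -> t <> T -> t <> c -> h t = 1 + (- / c) * t).
{ intros t Ht HtT Htc.
  assert (HL : t < L) by lra.
  pose proof (Hzero t (conj (proj1 Ht) HL) ltac:(lra) Htc) as Z. rewrite phiE in Z.
  apply Rmult_integral in Z. destruct Z as [Z|Z]; [|exfalso; lra].
  replace (1 + - / c * t) with (1 - t / c) by (field; lra).
  destruct (Rlt_or_le t c) as [Hlt|Hle].
  - rewrite Gin in Z by lra. unfold F in Z. apply (pow_inj_nn _ _ (n - 1)); auto.
    apply (H_nn M m n h b HH). apply ell_nn; lra. lia. lra.
  - rewrite Gout in Z by lra. unfold F in Z.
    pose proof (pow_pos_p (h t) (n - 1) (H_pos M m n h b HH t ltac:(lra))). lra. }
pose proof (eq_extend h b (- / c) T c Hb (proj1 (proj2 (proj2 (proj2 HH)))) ClA) as Ext.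
assert (Ext' : forall t, 0 <= t <= b -> h t = 1 - t / c).
{ intros t Ht. rewrite Ext by auto. field. lra. }
split; auto.
assert (Hbc : b <= c).
{ pose proof (H_nn M m n h b HH b). rewrite Ext' in H by lra.
  assert (b / c <= 1) by lra. apply Rmult_le_compat_r with (r := c) in H1; [|lra].
  unfold Rdiv in H1. rewrite Rmult_assoc, Rinv_l in H1; lra. }
destruct (Rle_lt_or_eq_dec b c Hbc) as [Hlt|Heq]; auto. exfalso.
set (t := (b + c) / 2).
assert (HL : L = c) by (unfold L; rewrite Rmax_right; lra).
pose proof (Hzero t ltac:(unfold t; lra) ltac:(unfold t; lra) ltac:(unfold t; lra)) as Z.
rewrite phiE, Fout, Gin in Z by (unfold t; lra).
assert (0 < 1 - t / c).
{ assert (t / c < 1); [|lra]. apply Rmult_lt_reg_r with c; [lra|]. unfold Rdiv. rewrite Rmult_assoc, Rinv_l; unfold t; lra. }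
pose proof (pow_pos_p _ (n - 1) H). assert (T - t < 0) by (unfold t; lra). nra.
Qed.

Lemma max_core (M m : R) (n : nat) (h : R -> R) (b : R) (g : R -> R) (c : R) :
  (2 <= n)%nat -> inH M m n h b -> inH M m n g c ->
  (forall t, 0 <= t <= c -> g t = 1 + m * t) -> mu n g c <= mu n h b ->
  (forall t, 0 <= t <= b -> h t = 1 + m * t) /\ b = c.
Proof.
intros Hn HH H0 Hg Hmu.
pose proof (H_b M m n h b HH) as Hb. pose proof (H_b M m n g c H0) as Hc.
set (L := Rmax b c).
assert (HbL : b <= L) by apply Rmax_l. assert (HcL : c <= L) by apply Rmax_r.
set (F := fun t => h t ^ (n - 1)). set (G := fun t => g t ^ (n - 1)).
destruct (RInt_is M m n h b L Hn HH HbL) as [I1 I2].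
destruct (RInt_is M m n g c L Hn H0 HcL) as [I3 I4].
set (phi := fun t => (c * G t - t * G t) - (c * F t - t * F t)).
assert (Iphi : is_RInt phi 0 L ((c * mu n g c - M) - (c * mu n h b - M))) by (apply lin_comb; auto).
assert (Hint : RInt phi 0 L <= 0).
{ rewrite (is_RInt_unique _ _ _ _ Iphi). assert (c * mu n g c <= c * mu n h b) by (apply Rmult_le_compat_l; lra). lra. }
assert (Hex : ex_RInt phi 0 L) by (eexists; eauto).
assert (Fnn : forall t, 0 <= F t) by (intros t; apply pow_le, (H_nn M m n h b HH)).
assert (Gnn : forall t, 0 <= G t) by (intros t; apply pow_le, (H_nn M m n g c H0)).
assert (Fout : forall t, b < t -> F t = 0) by (intros t Ht; unfold F; rewrite (H_zero M m n h b HH) by lra; apply pow_i; lia).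
assert (Gout : forall t, c < t -> G t = 0) by (intros t Ht; unfold G; rewrite (H_zero M m n g c H0) by lra; apply pow_i; lia).
assert (Gin : forall t, 0 <= t <= c -> G t = (1 + m * t) ^ (n - 1)) by (intros t Ht; unfold G; rewrite Hg; auto).
assert (ell_nn : forall t, 0 <= t <= c -> 0 <= 1 + m * t).
{ intros t Ht. rewrite <- Hg by auto. apply (H_nn M m n g c H0). }
assert (phiE : forall t, phi t = (G t - F t) * (c - t)) by (intros t; unfold phi; ring).
assert (Hpos : forall t, 0 < t < L -> 0 <= phi t).
{ intros t Ht. rewrite phiE. destruct (Rle_or_lt t c) as [Htc|Htc].
  - apply Rmult_le_pos; [|lra].
    destruct (Rle_or_lt t b) as [Htb|Htb].
    + rewrite Gin by lra. unfold F. assert (h t ^ (n - 1) <= (1 + m * t) ^ (n - 1)); [|lra].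
      apply pow_incr. split. apply (H_nn M m n h b HH). apply (H_upper M m n h b HH); lra.
    + rewrite Fout by lra. specialize (Gnn t). lra.
  - rewrite Gout by lra. specialize (Fnn t). nra. }
assert (Hcont : forall t, 0 < t -> t <> b -> t <> c -> continuity_pt phi t).
{ intros t Ht Htb Htc. apply cont_comb.
  eapply H_cont_F; eauto. eapply H_cont_F; eauto. }
assert (Hzero : forall t, 0 < t < L -> t <> b -> t <> c -> phi t = 0).
{ intros t Ht Htb Htc. apply Rle_antisym.
  apply (zero_int phi 0 L t); auto; try lra. apply Hcont; auto; lra. apply Hpos; auto. }
assert (Hbc : b <= c).
{ apply Rnot_lt_le. intros Hlt.
  set (t := (c + b) / 2).
  assert (HL : L = b) by (unfold L; rewrite Rmax_left; lra).
  pose proof (Hzero t ltac:(unfold t; lra) ltac:(unfold t; lra) ltac:(unfold t; lra)) as Z.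
  rewrite phiE, Gout in Z by (unfold t; lra).
  pose proof (pow_pos_p (h t) (n - 1) (H_pos M m n h b HH t ltac:(unfold t; lra))).
  assert (c - t < 0) by (unfold t; lra). unfold F in Z. nra. }
assert (ClA : forall t, 0 < t < b -> t <> c -> t <> c -> h t = 1 + m * t).
{ intros t Ht Htc _.
  pose proof (Hzero t ltac:(lra) ltac:(lra) Htc) as Z. rewrite phiE in Z.
  apply Rmult_integral in Z. destruct Z as [Z|Z]; [|exfalso; lra].
  rewrite Gin in Z by lra. unfold F in Z. symmetry. apply (pow_inj_nn _ _ (n - 1)); auto.
  apply ell_nn; lra. apply (H_nn M m n h b HH). lia. lra. }
pose proof (eq_extend h b m c c Hb (proj1 (proj2 (proj2 (proj2 HH)))) ClA) as Ext.
split; auto.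
destruct (Rle_lt_or_eq_dec b c Hbc) as [Hlt|Heq]; auto. exfalso.
set (t := (b + c) / 2).
assert (HL : L = c) by (unfold L; rewrite Rmax_right; lra).
pose proof (Hzero t ltac:(unfold t; lra) ltac:(unfold t; lra) ltac:(unfold t; lra)) as Z.
rewrite phiE, Fout, Gin in Z by (unfold t; lra).
assert (0 < 1 + m * t).
{ rewrite <- Hg by (unfold t; lra). apply (H_pos M m n g c H0). unfold t; lra. }
pose proof (pow_pos_p _ (n - 1) H). assert (0 < c - t) by (unfold t; lra). nra.
Qed.

Lemma min_ineq (M m : R) (n : nat) (h0 : R -> R) (c : R) :
  (2 <= n)%nat -> inH M m n h0 c -> (forall t, 0 <= t <= c -> h0 t = 1 - t / c) ->
  forall h b, inH M m n h b -> mu n h0 c <= mu n h b.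
Proof.
intros Hn H0 Hh0 h b HH. apply Rnot_lt_le. intros Hlt.
destruct (min_core M m n h b h0 c Hn HH H0 Hh0 ltac:(lra)) as [Heq Hbc]. subst c.
assert (h = h0).
{ apply functional_extensionality. intros t. destruct (Rle_dec 0 t); [destruct (Rle_dec t b)|].
  - rewrite Heq, Hh0 by lra. auto.
  - rewrite (H_zero M m n h b HH), (H_zero M m n h0 b H0) by lra. auto.
  - rewrite (H_zero M m n h b HH), (H_zero M m n h0 b H0) by lra. auto. }
subst. lra.
Qed.

Lemma max_ineq (M m : R) (n : nat) (g : R -> R) (c : R) :
  (2 <= n)%nat -> inH M m n g c -> (forall t, 0 <= t <= c -> g t = 1 + m * t) ->
  forall h b, inH M m n h b -> mu n h b <= mu n g c.
Proof.
intros Hn H0 Hg h b HH. apply Rnot_lt_le. intros Hlt.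
destruct (max_core M m n h b g c Hn HH H0 Hg ltac:(lra)) as [Heq Hbc]. subst c.
assert (h = g).
{ apply functional_extensionality. intros t. destruct (Rle_dec 0 t); [destruct (Rle_dec t b)|].
  - rewrite Heq, Hg by lra. auto.
  - rewrite (H_zero M m n h b HH), (H_zero M m n g b H0) by lra. auto.
  - rewrite (H_zero M m n h b HH), (H_zero M m n g b H0) by lra. auto. }
subst. lra.
Qed.

Lemma moment_int0 (k : nat) (be : R) : 0 < be ->
  is_RInt (fun t => t * (1 - t/be)^k) 0 be (be^2 / (INR (S k) * INR (S k + 1))).
Proof.
intros Hb.
set (A := fun t => - be^2 * ((1 - t/be)^(S k) / INR (S k) - (1 - t/be)^(S (S k)) / INR (S (S k)))).
assert (Hn1 : INR (S k) <> 0) by (apply not_0_INR; lia).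
assert (Hn2 : INR (S (S k)) <> 0) by (apply not_0_INR; lia).
replace (be^2 / (INR (S k) * INR (S k + 1))) with (minus (A be) (A 0)).
- apply (is_RInt_derive (V:=R_CompleteNormedModule) A).
  + intros x _. unfold A. auto_derive; [exact I|].
    change (match k with 0%nat => 1 | S _ => INR k + 1 end) with (INR (S k)). unfold Rminus, Rdiv. rewrite S_INR in Hn2. field. repeat split; auto; lra.
  + intros x _. apply (@ex_derive_continuous R_AbsRing R_NormedModule). auto_derive. exact I.
- change (A be - A 0 = be^2 / (INR (S k) * INR (S k + 1))). unfold A. replace (1 - be/be) with 0 by (field; lra).
  replace (1 - 0/be) with 1 by (field; lra).
  rewrite Nat.add_1_r. rewrite pow_i by lia. rewrite pow_i by lia. rewrite !pow1. rewrite (S_INR (S k)) in *. field. split; lra.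
Qed.

Lemma moment_int (n : nat) (be : R) : (2 <= n)%nat -> 0 < be ->
  is_RInt (fun t => t * (1 - t/be)^(n - 1)) 0 be (be^2 / (INR n * INR (n + 1))).
Proof.
intros Hn Hb. destruct n as [|k]; [lia|].
replace (S k - 1)%nat with k by lia. apply moment_int0; auto.
Qed.

Theorem lemma5 (M m : R) (n : nat) (HM : 0 < M) (Hn : (2 <= n)%nat) :
  ((exists h b, inH M m n h b) <-> - / sqrt (M * INR n * INR (n + 1)) <= m) /\
  (- / sqrt (M * INR n * INR (n + 1)) <= m ->
     (exists h b, inH M m n h b /\
        forall h' b', inH M m n h' b' -> mu n h b <= mu n h' b') /\
     (forall h b, inH M m n h b ->
        ((forall h' b', inH M m n h' b' -> mu n h b <= mu n h' b') <->
         ((exists a c, forall t, 0 <= t <= b -> h t = a * t + c) /\ h b = 0))) /\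
     (exists h b, inH M m n h b /\
        forall h' b', inH M m n h' b' -> mu n h' b' <= mu n h b) /\
     (forall h b, inH M m n h b ->
        ((forall h' b', inH M m n h' b' -> mu n h' b' <= mu n h b) <->
         (forall t, 0 <= t <= b -> h t = 1 + m * t)))).
Proof.
assert (HN : 0 < INR n * INR (n + 1)).
{ apply Rmult_lt_0_compat; apply lt_0_INR; lia. }
set (b0 := sqrt (M * INR n * INR (n + 1))).
assert (HMN : 0 < M * INR n * INR (n + 1)) by (rewrite Rmult_assoc; apply Rmult_lt_0_compat; auto).
assert (Hb0 : 0 < b0) by (unfold b0; apply sqrt_lt_R0; auto).
assert (Hb0M : b0 ^ 2 / (INR n * INR (n + 1)) = M).
{ assert (INR n <> 0) by (apply not_0_INR; lia). assert (INR (n+1) <> 0) by (apply not_0_INR; lia).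
  unfold b0. rewrite pow2_sqrt by lra. field; auto. }
assert (Hmom : forall be, 0 < be ->
  is_RInt (fun t => t * (1 + (- / be) * t) ^ (n - 1)) 0 be (be ^ 2 / (INR n * INR (n + 1)))).
{ intros be Hbe. apply (is_RInt_ext (fun t => t * (1 - t / be) ^ (n - 1))).
  intros x _. f_equal. f_equal. field. lra. apply moment_int; auto. }
set (h0 := aff (- / b0) b0).
assert (Hh0 : forall t, 0 <= t <= b0 -> h0 t = 1 - t / b0).
{ intros t Ht. unfold h0. rewrite aff_in by auto. field. lra. }
assert (Hh0H : - / b0 <= m -> inH M m n h0 b0).
{ intros Hm. apply aff_inH; auto. right. field. lra. rewrite <- Hb0M. apply Hmom; auto. }
split.
{ split.
  - intros [h [b HH]]. apply Rnot_lt_le. intros Hlt.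
    assert (Hm0 : m < 0). { assert (0 < / b0) by (apply Rinv_0_lt_compat; lra). lra. }
    set (c1 := - / m).
    assert (Hc1 : 0 < c1) by (unfold c1; assert (/ m < 0) by (apply Rinv_lt_0_compat; lra); lra).
    assert (Hc1m : c1 * (- m) = 1) by (unfold c1; field; lra).
    assert (Hc1b0 : c1 < b0).
    { assert (/ b0 < - m) by lra.
      assert (c1 = / (- m)) by (unfold c1; rewrite Rinv_opp; auto).
      rewrite H0. rewrite <- (Rinv_inv b0). apply Rinv_lt_contravar; auto.
      apply Rmult_lt_0_compat; [apply Rinv_0_lt_compat|]; lra. }
    pose proof (H_b M m n h b HH) as Hb.
    assert (Hbc1 : b <= c1).
    { pose proof (H_upper M m n h b HH b ltac:(lra)). pose proof (H_nn M m n h b HH b).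
      apply Rmult_le_reg_r with (- m); [lra|]. rewrite Hc1m. nra. }
    destruct (H_RInt M m n h b Hn HH c1 Hbc1) as [_ R2].
    destruct (H_exRInt M m n h b Hn HH c1 Hbc1) as [_ E2].
    assert (Hm1 : - / c1 = m) by (unfold c1; field; lra).
    pose proof (Hmom c1 Hc1) as I1. rewrite Hm1 in I1.
    assert (Hle : RInt (fun t => t * h t ^ (n - 1)) 0 c1 <= RInt (fun t => t * (1 + m * t) ^ (n - 1)) 0 c1).
    { apply RInt_le; auto. lra. eexists; eauto.
      intros t Ht. apply Rmult_le_compat_l; [lra|].
      destruct (Rle_or_lt t b) as [Htb|Htb].
      - apply pow_incr. split. apply (H_nn M m n h b HH). apply (H_upper M m n h b HH). lra.
      - rewrite (H_zero M m n h b HH) by lra. rewrite pow_i by lia. apply pow_le.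
        assert (m * c1 <= m * t) by (apply Rmult_le_compat_neg_l; lra). nra. }
    rewrite R2, (is_RInt_unique _ _ _ _ I1) in Hle.
    assert (c1 ^ 2 / (INR n * INR (n + 1)) < b0 ^ 2 / (INR n * INR (n + 1))).
    { unfold Rdiv. apply Rmult_lt_compat_r. apply Rinv_0_lt_compat; auto. nra. }
    lra.
  - intros Hm. exists h0, b0. auto. }
intros Hm. pose proof (Hh0H Hm) as H0.
split.
{ exists h0, b0. split; auto. apply min_ineq; auto. }
split.
{ intros h b HH. pose proof (H_b M m n h b HH) as Hb. split.
  - intros Hmin. specialize (Hmin h0 b0 H0).
    destruct (min_core M m n h b h0 b0 Hn HH H0 Hh0 Hmin) as [Heq Hbb]. split.
    + exists (- / b0), 1. intros t Ht. rewrite Heq by auto. field. lra.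
    + rewrite Heq by lra. rewrite Hbb. field. lra.
  - intros [[a [c Haff]] Hhb].
    assert (Hc : c = 1). { pose proof (Haff 0 ltac:(lra)). rewrite (H_0 M m n h b HH) in H. lra. }
    subst c.
    assert (Ha : a = - / b). { pose proof (Haff b ltac:(lra)). rewrite Hhb in H.
      apply Rmult_eq_reg_r with b; [|lra]. field_simplify; lra. }
    apply min_ineq; auto. intros t Ht. rewrite Haff by auto. rewrite Ha. field. lra. }
set (f := fun t => t * (1 + m * t) ^ (n - 1)).
assert (Cf : forall x, continuous f x).
{ intros x. apply (@ex_derive_continuous R_AbsRing R_NormedModule). unfold f. auto_derive. exact I. }
assert (Exf : forall a c, ex_RInt f a c).
{ intros a c. apply (ex_RInt_continuous (V:=R_CompleteNormedModule)). intros z _. apply Cf. }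
set (phi := fun be => RInt f 0 be).
assert (Cphi : continuity phi).
{ intros x. apply continuity_pt_filterlim.
  apply (continuous_RInt_1 (V:=R_NormedModule) f 0 x phi).
  apply filter_forall. intros z. apply (RInt_correct (V:=R_CompleteNormedModule)). apply Exf. }
assert (Phi0 : phi 0 = 0) by (unfold phi; rewrite RInt_point; reflexivity).
assert (Phib0 : M <= phi b0).
{ unfold phi. pose proof (Hmom b0 Hb0) as I. rewrite Hb0M in I.
  rewrite <- (is_RInt_unique _ _ _ _ I). apply RInt_le; auto. lra. eexists; eauto.
  intros t Ht. unfold f. apply Rmult_le_compat_l; [lra|]. apply pow_incr. split.
  - assert (t / b0 < 1) by (apply Rmult_lt_reg_r with b0; [lra|]; unfold Rdiv; rewrite Rmult_assoc, Rinv_l; lra).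
    replace (1 + - / b0 * t) with (1 - t / b0) by (field; lra). lra.
  - apply Rplus_le_compat_l. apply Rmult_le_compat_r; lra. }
destruct (IVT_gen phi 0 b0 M Cphi) as [bg [Hbg Hphibg]].
{ rewrite Phi0. rewrite Rmin_left, Rmax_right by lra. lra. }
rewrite Rmin_left, Rmax_right in Hbg by lra.
assert (Hbg0 : 0 < bg). { destruct (Req_dec bg 0) as [e|ne]. rewrite e, Phi0 in Hphibg. lra. lra. }
set (g := aff m bg).
assert (Hg : forall t, 0 <= t <= bg -> g t = 1 + m * t) by (intros t Ht; unfold g; apply aff_in; auto).
assert (HgH : inH M m n g bg).
{ apply aff_inH; auto. lra.
  - assert (bg / b0 <= 1) by (apply Rmult_le_reg_r with b0; [lra|]; unfold Rdiv; rewrite Rmult_assoc, Rinv_l; lra).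
    assert (- / b0 * bg <= m * bg) by (apply Rmult_le_compat_r; lra).
    replace (- / b0 * bg) with (- (bg / b0)) in H by (field; lra). lra.
  - rewrite <- Hphibg. apply (RInt_correct (V:=R_CompleteNormedModule)). apply Exf. }
split.
{ exists g, bg. split; auto. apply max_ineq; auto. }
intros h b HH. split.
- intros Hmax. specialize (Hmax g bg HgH).
  destruct (max_core M m n h b g bg Hn HH HgH Hg Hmax) as [Heq _]. auto.
- intros Heq. apply max_ineq; auto.
Qed.
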